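(* Let $k$ be a field, $E$ a finite-dimensional $k$-vector space, and $f\in\operatorname{End}_k(E)$ an endomorphism with annihilating polynomial $x^n$. Let $\bigcup_{j=1}^{r}\{e_j,f(e_j),\dots,f^{n_j-1}(e_j)\}$ be a Jordan basis of $E$ induced by $f$ (so $f^{n_j}(e_j)=0$ and these vectors form a basis of $E$). Then the generalized inverses $g\in\operatorname{End}_k(E)$ of $f$ are exactly the linear maps determined by $$g(f^i(e_j))=\begin{cases} f^{i-1}(e_j)+\sum_{s=1}^{r}\lambda^{s}_{j,i} f^{n_s-1}(e_s) & \text{if } i\ge 1,\\ \sum_{s=1}^{r}\sum_{h=0}^{n_s-1}\alpha^{s}_{j,h} f^{h}(e_s) & \text{if } i=0,\end{cases}$$ for $j\in\{1,\dots,r\}$ and $i\in\{0,\dots,n_j-1\}$, where $\lambda^{s}_{j,i},\alpha^{s}_{j,h}\in k$ are arbitrary scalars.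
   Context: A generalized inverse of an endomorphism $f$ of $E$ is an endomorphism $g$ of $E$ with $f\circ g\circ f=f$. *)

(* Defs.v *)
From HB Require Import structures.
From mathcomp Require Import all_boot all_order all_algebra.
Set Implicit Arguments. Unset Strict Implicit. Unset Printing Implicit Defensive.
Import GRing.Theory.
Local Open Scope ring_scope.

Definition gen_inverse (k : fieldType) (E : vectType k) (f g : 'End(E)) : Prop :=
  (f \o g \o f)%VF = f.

Definition jordan_family (k : fieldType) (E : vectType k) (f : 'End(E))
    (r : nat) (nj : 'I_r -> nat) (e : 'I_r -> E) : seq E :=
  [seq iter i f (e j) | j <- enum 'I_r, i <- iota 0 (nj j)].

Definition jordan_basis (k : fieldType) (E : vectType k) (f : 'End(E))
    (r : nat) (nj : 'I_r -> nat) (e : 'I_r -> E) : Prop :=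
  (forall j, 0 < nj j)%N /\ (forall j, iter (nj j) f (e j) = 0) /\
  basis_of fullv (jordan_family f nj e).

(* Main.v *)
Require Import Defs.
From HB Require Import structures.
From mathcomp Require Import all_boot all_order all_algebra.
From Stdlib Require Import ClassicalEpsilon.
Import GRing.Theory.
Local Open Scope ring_scope.

Lemma perm_rcons_flat (T : eqType) (I : Type) (l : seq I) (s : I -> seq T) (t : I -> T) :
  perm_eq (flatten [seq rcons (s x) (t x) | x <- l])
          ([seq t x | x <- l] ++ flatten [seq s x | x <- l]).
Proof.
elim: l => //= x l IH.
rewrite -cats1 -catA perm_catCA /= perm_cons.
by rewrite perm_sym perm_catCA perm_cat2l perm_sym.
Qed.

Lemma perm_cons_flat (T : eqType) (I : Type) (l : seq I) (s : I -> seq T) (t : I -> T) :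
  perm_eq (flatten [seq t x :: s x | x <- l])
          ([seq t x | x <- l] ++ flatten [seq s x | x <- l]).
Proof.
elim: l => //= x l IH.
rewrite perm_cons.
by rewrite perm_sym perm_catCA perm_cat2l perm_sym.
Qed.

Lemma span_iota (k : fieldType) (E : vectType k) (F : nat -> E) n v :
  v \in <<[seq F i | i <- iota 0 n]>>%VS ->
  exists c : nat -> k, v = \sum_(h < n) c h *: F h.
Proof.
elim: n v => [|n IH] v.
  by rewrite /= span_nil memv0 => /eqP ->; exists (fun _ => 0); rewrite big_ord0.
have -> : iota 0 n.+1 = iota 0 n ++ [:: n] by rewrite -addn1 iotaD.
rewrite map_cat span_cat /= span_seq1 => /memv_addP[u /IH[c ->]].
move=> [w /vlineP[a ->] ->].
exists (fun h => if h == n then a else c h).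
rewrite big_ord_recr /= eqxx; congr (_ + _).
by apply: eq_bigr => i _; rewrite (ltn_eqF (ltn_ord i)).
Qed.

Theorem lemma3p9 (k : fieldType) (E : vectType k) (f : 'End(E)) (n : nat)
  (r : nat) (nj : 'I_r -> nat) (e : 'I_r -> E) :
  (forall x : E, iter n f x = 0) ->
  jordan_basis f nj e ->
  forall g : 'End(E),
    gen_inverse f g <->
    exists (lambda : 'I_r -> nat -> 'I_r -> k) (alpha : 'I_r -> 'I_r -> nat -> k),
      forall (j : 'I_r) (i : nat), (i < nj j)%N ->
        g (iter i f (e j)) =
          if (0 < i)%N then
            iter i.-1 f (e j) + \sum_(s < r) lambda j i s *: iter (nj s).-1 f (e s)
          else
            \sum_(s < r) \sum_(h < nj s) alpha j s h *: iter h f (e s).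
Proof.
move=> _ [njP [njZ Xb]] g.
have fX := basis_free Xb; have spX := span_basis Xb.
rewrite /jordan_family in fX spX.
pose top j := iter (nj j).-1 f (e j).
pose Bn j := [seq iter i f (e j) | i <- iota 0 (nj j).-1].
have eqB j : [seq iter i f (e j) | i <- iota 0 (nj j)] = rcons (Bn j) (top j).
  rewrite /Bn /top; case: (nj j) (njP j) => // m _.
  have -> : iota 0 m.+1 = iota 0 m ++ [:: m] by rewrite -addn1 iotaD.
  by rewrite map_cat cats1.
have eqB' j : [seq iter i f (e j) | i <- iota 0 (nj j)] = e j :: map f (Bn j).
  rewrite /Bn; case: (nj j) (njP j) => // m _ /=; congr (_ :: _).
  by rewrite -map_comp (iotaDl 1 0) -map_comp; apply: eq_map.
have ftop j : f (top j) = 0.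
  by rewrite /top -[f _]/(iter (nj j).-1.+1 f (e j)) prednK.
pose Xn := flatten [seq Bn j | j <- enum 'I_r].
pose tops := [seq top j | j <- enum 'I_r].
set X := [seq iter i f (e j) | j <- enum 'I_r, i <- iota 0 (nj j)] in fX spX.
have perm1 : perm_eq X (tops ++ Xn).
  rewrite /X (eq_map eqB); exact: perm_rcons_flat.
have perm2 : perm_eq X ([seq e j | j <- enum 'I_r] ++ map f Xn).
  rewrite /X (eq_map eqB') /Xn map_flatten -map_comp; exact: perm_cons_flat.
have ftops : free tops by move: fX; rewrite (perm_free perm1) => /catl_free.
have fXn : free Xn by move: fX; rewrite (perm_free perm1) => /catr_free.
have ffXn : free (map f Xn) by move: fX; rewrite (perm_free perm2) => /catr_free.
have cap0 : (<<Xn>> :&: lker f)%VS = 0%VS.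
  apply/eqP; rewrite -dimv_eq0; apply/eqP.
  have := limg_ker_dim f <<Xn>>%VS.
  rewrite limg_span (eqP fXn) (eqP ffXn) size_map.
  by move=> /eqP; rewrite -{2}[size Xn]add0n eqn_add2r => /eqP.
pose T := [tuple top s | s < r].
have valT : val T = tops.
  by [].

have ker w : f w = 0 -> w \in <<T>>%VS.
  move=> fw; have : w \in <<X>>%VS by rewrite spX memvf.
  rewrite (eq_span (perm_mem perm1)) span_cat => /memv_addP[u Hu [v Hv Ew]].
  have fu : f u = 0.
    apply/eqP; rewrite -memv_ker; apply: (subvP _ u Hu); apply/span_subvP.
    by move=> x /mapP[j _ ->]; rewrite memv_ker ftop.
  have : v \in (<<Xn>> :&: lker f)%VS.
    by apply/memv_capP; split => //; rewrite memv_ker -fw Ew linearD /= fu add0r.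
  rewrite cap0 memv0 => /eqP v0.
  by rewrite valT Ew v0 addr0.
have rep x : exists c : 'I_r -> nat -> k,
    x = \sum_(s < r) \sum_(h < nj s) c s h *: iter h f (e s).
  have : x \in (\sum_(s < r) <<[seq iter i f (e s) | i <- iota 0 (nj s)]>>)%VS.
    apply: (subvP _ x (memvf x)); rewrite -spX; apply/span_subvP => y.
    move=> /flattenP[b /mapP[j _ ->] yb].
    exact: (subvP (sumv_sup j isT (subvv _))) _ (memv_span yb).
  move=> /memv_sumP[vs Hvs ->].
  have H s : exists c : nat -> k, vs s = \sum_(h < nj s) c h *: iter h f (e s).
    exact: span_iota (Hvs s isT).
  exists (fun s => proj1_sig (constructive_indefinite_description _ (H s))).
  apply: eq_bigr => s _.
  exact: (proj2_sig (constructive_indefinite_description _ (H s))).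
split.
- move=> ginv.
  have fgf x : f (g (f x)) = f x.
    by move/lfunP: ginv => /(_ x); rewrite !comp_lfunE.
  exists (fun j i s => coord T s (g (iter i f (e j)) - iter i.-1 f (e j))).
  exists (fun j => proj1_sig (constructive_indefinite_description _ (rep (g (e j))))).
  move=> j i lt_i.
  case: ifP => [i_gt0 | ].
    set w := _ - _.
    have Hw : w \in <<T>>%VS.
      apply: ker; rewrite /w linearB /= -{1}(prednK i_gt0).
      by rewrite -[iter i.-1.+1 f _]/(f (iter i.-1 f (e j))) fgf subrr.
    have -> : \sum_(s < r) coord T s w *: iter (nj s).-1 f (e s) = w.
      rewrite [RHS](coord_span Hw); apply: eq_bigr => s _.
      by rewrite -tnth_nth tnth_mktuple.
    by rewrite /w addrC subrK.
  move=> /negbT; rewrite lt0n negbK => /eqP i0; subst i.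
  exact: (proj2_sig (constructive_indefinite_description _ (rep (g (e j))))).
- move=> [lambda [alpha H]].
  apply/lfunP => x.
  have : {in <<X>>%VS, (f \o g \o f)%VF =1 f}.
    apply/span_lfunP => y /flattenP[b /mapP[j _ ->] /mapP[i]].
    rewrite mem_iota add0n => /andP[_ lt_i] ->.
    rewrite !comp_lfunE -[f (iter i f _)]/(iter i.+1 f (e j)).
    have [lt_i1 | ge_i1] := ltnP i.+1 (nj j).
      rewrite H //= linearD linear_sum /=.
      rewrite big1 ?addr0 // => s _.
      by rewrite linearZ /= ftop scaler0.
    have -> : i.+1 = nj j by apply/eqP; rewrite eqn_leq lt_i ge_i1.
    by rewrite njZ !linear0.
  by apply; rewrite spX memvf.
Qed.
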